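(* Let $\Gamma$ be an Arf numerical semigroup with multiplicity sequence $(d_1,\dots,d_r)$. Then \[ E(\Gamma,2)=\min\big(\{d_i+i-1 : 1\le i\le r-1\}\cup\{r\}\big)=\min\{d_1,d_2+1,\dots,d_{r-1}+r-2,r\}. \]
   Context: A numerical semigroup is a subset $\Gamma\subseteq\mathbb N$ containing $0$, closed under addition, with finite complement; write $\Gamma=\{0=\rho_1<\rho_2<\cdots\}$, with conductor $c=\rho_r$ (least $c$ with $c+\mathbb N\subseteq\Gamma$) and genus $g=|\mathbb N\setminus\Gamma|$. $\Gamma$ is Arf if $\rho_i+\rho_j-\rho_k\in\Gamma$ for all $i\ge j\ge k$. The multiplicity sequence is $(d_1,\dots,d_r)$ with $d_i=\rho_{i+1}-\rho_i$. For $x\in\mathbb Z$ let $D_\Gamma(x)=\{s\in\Gamma:x-s\in\Gamma\}$, $D_\Gamma(x_1,x_2)=D_\Gamma(x_1)\cup D_\Gamma(x_2)$, and $\delta^2_\Gamma(m)=\min\{|D_\Gamma(m_1,m_2)|: m\le m_1<m_2,\ m_i\in\Gamma\}$. The second Feng-Rao number $E(\Gamma,2)$ is the integer (known to exist) such that $\delta^2_\Gamma(m)=m+1-2g+E(\Gamma,2)$ for all $m\ge 2c-1$; equivalently $E(\Gamma,2)=\min\{|\{s\in\Gamma: s-x\notin\Gamma\}| : 1\le x\le \rho_2\}$. *)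

(* Defs.v *)
From mathcomp Require Import all_boot.
Set Implicit Arguments. Unset Strict Implicit. Unset Printing Implicit Defensive.

Definition numerical_semigroup (Gamma : nat -> Prop) : Prop :=
  [/\ Gamma 0,
      (forall a b, Gamma a -> Gamma b -> Gamma (a + b)) &
      exists c, forall n, c <= n -> Gamma n].

(* rho enumerates Gamma increasingly, 1-indexed: Gamma = {rho 1 < rho 2 < ...}. *)
Definition enumerates (Gamma : nat -> Prop) (rho : nat -> nat) : Prop :=
  (forall i, 1 <= i -> rho i < rho i.+1) /\
  (forall x, Gamma x <-> exists2 i, 1 <= i & rho i = x).

Definition is_conductor (Gamma : nat -> Prop) (c : nat) : Prop :=
  (forall n, c <= n -> Gamma n) /\
  (forall c', (forall n, c' <= n -> Gamma n) -> c <= c').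

(* Arf: rho_i + rho_j - rho_k in Gamma for i >= j >= k, stated on elements. *)
Definition arf (Gamma : nat -> Prop) : Prop :=
  forall x y z, Gamma x -> Gamma y -> Gamma z -> z <= y -> y <= x ->
    Gamma (x + y - z).

Definition mult_seq (rho : nat -> nat) (i : nat) : nat := rho i.+1 - rho i.

Definition has_card (P : nat -> Prop) (k : nat) : Prop :=
  exists s : seq nat, [/\ uniq s, (forall y, y \in s <-> P y) & size s = k].

(* {s in Gamma : s - x notin Gamma}, with s - x taken in Z:
   s - x in Gamma  iff  x <= s and Gamma (s - x). *)
Definition shift_gap_set (Gamma : nat -> Prop) (x : nat) : nat -> Prop :=
  fun s => Gamma s /\ ~ (x <= s /\ Gamma (s - x)).

Definition is_E2 (Gamma : nat -> Prop) (rho : nat -> nat) (e : nat) : Prop :=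
  (exists x, [/\ 1 <= x, x <= rho 2 & has_card (shift_gap_set Gamma x) e]) /\
  (forall x k, 1 <= x -> x <= rho 2 -> has_card (shift_gap_set Gamma x) k -> e <= k).

(* Main.v *)
Require Import Defs.
From mathcomp Require Import all_boot.
From mathcomp Require Import zify.

Lemma countA (g : nat -> bool) x L :
  count (fun n => g n && ~~ ((x <= n) && g (n - x))) (iota 0 (L + x)) =
  count g (iota L x) + count (fun m => g m && ~~ g (m + x)) (iota 0 L).
Proof.
elim: L => [|L IH].
  rewrite add0n /= addn0; apply: eq_in_count => n.
  rewrite mem_iota add0n => /andP[_ hn]; by rewrite leqNgt hn /= andbT.
have -> : L.+1 + x = (L + x) + 1 by lia.
rewrite iotaD count_cat IH.
rewrite (_ : iota 0 L.+1 = iota 0 L ++ [:: L]); last by rewrite -addn1 iotaD.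
rewrite count_cat /= !add0n leq_addl addnK.
have := congr1 (count g) (iotaD L x 1); rewrite addn1 /= count_cat /= => h.
case: (g L) h; case: (g (L + x)) => /= h; lia.
Qed.

Lemma C1 (p : pred nat) c (t : seq nat) :
  (forall m, m < c -> p m -> m \in t) -> count p (iota 0 c) <= size t.
Proof.
move=> H; rewrite -size_filter; apply: uniq_leq_size.
  exact: filter_uniq (iota_uniq _ _).
move=> m; rewrite mem_filter mem_iota add0n => /andP[pm /andP[_ hm]]; exact: H.
Qed.

Lemma C2 (p : pred nat) c (t : seq nat) :
  uniq t -> (forall y, y \in t -> y < c /\ p y) -> size t <= count p (iota 0 c).
Proof.
move=> u H; rewrite -size_filter; apply: uniq_leq_size => // y /H [h1 h2].
by rewrite mem_filter h2 mem_iota /= add0n h1.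
Qed.

Lemma bigmin_le_r (F : nat -> nat) r (s : seq nat) :
  \big[minn/r]_(i <- s) F i <= r.
Proof.
elim: s => [|a s IH]; first by rewrite big_nil.
rewrite big_cons; exact: leq_trans (geq_minr _ _) IH.
Qed.

Lemma bigmin_le_F (F : nat -> nat) r (s : seq nat) i0 :
  i0 \in s -> \big[minn/r]_(i <- s) F i <= F i0.
Proof.
elim: s => [|a s IH] //; rewrite in_cons big_cons => /orP[/eqP->|h].
  exact: geq_minl.
exact: leq_trans (geq_minr _ _) (IH h).
Qed.

Lemma bigmin_cases (F : nat -> nat) r (s : seq nat) :
  \big[minn/r]_(i <- s) F i = r \/ exists2 i, i \in s & \big[minn/r]_(i <- s) F i = F i.
Proof.
elim: s => [|a s IH]; first by left; rewrite big_nil.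
rewrite big_cons; case: (leqP (F a) (\big[minn/r]_(i <- s) F i)) => h.
  right; exists a; first by rewrite in_cons eqxx.
  by [].
case: IH => [->|[i hi ->]]; [by left | right; exists i => //].
by rewrite in_cons hi orbT.
Qed.

Lemma has_card_uniq P k1 k2 : has_card P k1 -> has_card P k2 -> k1 = k2.
Proof.
move=> [s1 [u1 m1 <-]] [s2 [u2 m2 <-]]; apply/eqP; rewrite eqn_leq.
apply/andP; split; apply: uniq_leq_size => // y.
  by move=> /m1 /m2.
by move=> /m2 /m1.
Qed.

Theorem proposition3p9 (Gamma : nat -> Prop) (rho : nat -> nat) (r : nat) :
  numerical_semigroup Gamma -> arf Gamma ->
  enumerates Gamma rho -> 1 <= r -> is_conductor Gamma (rho r) ->
  is_E2 Gamma rho (\big[minn/r]_(1 <= i < r) (mult_seq rho i + i - 1)).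
Proof.
move=> [G0 Gadd _] Garf [rinc Genum] r1 [Gc _].
set c := rho r.
set e := \big[minn/r]_(1 <= i < r) (mult_seq rho i + i - 1).
have rlt : forall i j, 1 <= i -> i < j -> rho i < rho j.
  move=> i j hi; elim: j => // j IH; rewrite ltnS leq_eqVlt => /orP[/eqP<-|hij].
    exact: rinc.
  exact: ltn_trans (IH hij) (rinc j (leq_trans hi (ltnW hij))).
have rle : forall i j, 1 <= i -> i <= j -> rho i <= rho j.
  move=> i j hi; rewrite leq_eqVlt => /orP[/eqP<-//|h]; exact: ltnW (rlt _ _ hi h).
have rinj : forall n, {in iota 1 n &, injective rho}.
  move=> n a b; rewrite !mem_iota => /andP[ha _] /andP[hb _] eq.
  case: (ltngtP a b) => // h; [have := rlt _ _ ha h | have := rlt _ _ hb h];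
    by rewrite eq ltnn.
have Gr : forall n, Gamma n -> exists2 i, 1 <= i & rho i = n.
  by move=> n /Genum.
have GE : forall i, 1 <= i -> Gamma (rho i) by move=> i hi; apply/Genum; exists i.
have rho1 : rho 1 = 0.
  have [i hi ei] := Gr 0 G0; have := rle 1 i isT hi; rewrite ei; lia.
have step : forall k n, 1 <= k -> Gamma n -> rho k < n -> rho k.+1 <= n.
  move=> k n hk /Gr [l hl <-] h.
  case: (leqP l k) => hlk; first by have := rle _ _ hl hlk; lia.
  exact: rle.
pose g n := (c <= n) || has (fun i => rho i == n) (iota 1 r).
have gP : forall n, Gamma n <-> g n.
  move=> n; split.
    move=> Gn; rewrite /g; case: (leqP c n) => [//|hn].
    have [i hi ei] := Gr n Gn; apply/orP; right; apply/hasP; exists i; last by rewrite ei.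
    rewrite mem_iota hi /=; case: (leqP i r) => hir; first by lia.
    have := rle r i r1 (ltnW hir); rewrite ei -/c; lia.
  case/orP => [/Gc //| /hasP [i]]; rewrite mem_iota => /andP[hi _] /eqP <-.
  exact: GE.
pose B x := count (fun m => g m && ~~ g (m + x)) (iota 0 c).
have card : forall x, has_card (shift_gap_set Gamma x) (x + B x).
  move=> x.
  exists (filter (fun n => g n && ~~ ((x <= n) && g (n - x))) (iota 0 (c + x))).
  split.
  - exact: filter_uniq (iota_uniq _ _).
  - move=> y; rewrite mem_filter mem_iota add0n /shift_gap_set; split.
      move=> /andP[/andP[gy ngy] hy]; split; first by apply/gP.
      move=> [hxy /gP Gy]; move: ngy; by rewrite hxy Gy.
    move=> [/gP Gy nG]; rewrite Gy /=; apply/andP; split.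
      apply/negP => /andP[h1 h2]; apply: nG; split => //; exact/gP.
    rewrite ltnNge; apply/negP => h; apply: nG; split; first by lia.
    apply: Gc; lia.
  - rewrite size_filter countA /B; congr (_ + _).
    rewrite (@eq_in_count _ _ predT); first by rewrite count_predT size_iota.
    by move=> n; rewrite mem_iota => /andP[h _]; rewrite /g h.
have Bmax : forall x k, (forall m, m < c -> g m -> ~~ g (m + x) -> exists2 i, 1 <= i <= k & rho i = m) -> B x <= k.
  move=> x k H; rewrite /B.
  have := @C1 (fun m => g m && ~~ g (m + x)) c (map rho (iota 1 k)).
  rewrite size_map size_iota; apply => m hm /andP[gm ngm].
  have [i /andP[h1 h2] <-] := H m hm gm ngm.
  apply: map_f; rewrite mem_iota h1 /=; lia.
have lower : forall x, 1 <= x -> e <= x + B x.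
  move=> x hx.
  have ex : exists i, (1 <= i) && g (rho i + x).
    by exists r; rewrite r1 /g -/c leq_addr.
  case: (ex_minnP ex) => j /andP[hj gj] jmin.
  have jr : j <= r by apply: jmin; rewrite r1 /g -/c leq_addr.
  have Bj : j.-1 <= B x.
    have := @C2 (fun m => g m && ~~ g (m + x)) c (map rho (iota 1 j.-1)).
    rewrite size_map size_iota; apply.
      by rewrite map_inj_in_uniq ?iota_uniq //; apply: rinj.
    move=> y /mapP [i]; rewrite mem_iota => /andP[hi1 hi2] ->.
    split; first by apply: rlt => //; lia.
    apply/andP; split; first by apply/gP; apply: GE.
    apply/negP => h; have := jmin i; rewrite hi1 h => /(_ isT); lia.
  case: (ltngtP j r) => hjr; last 1 first.
  - have := bigmin_le_r (fun i => mult_seq rho i + i - 1) r (index_iota 1 r).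
    rewrite -/e; lia.
  - have hd : mult_seq rho j <= x.
      have := step j (rho j + x) hj (proj2 (gP _) gj); rewrite /mult_seq.
      lia.
    have := @bigmin_le_F (fun i => mult_seq rho i + i - 1) r (index_iota 1 r) j.
    rewrite mem_index_iota hj hjr -/e => /(_ isT); lia.
  - lia.
have dpos : forall i, 1 <= i -> 1 <= mult_seq rho i.
  by move=> i hi; have := rinc i hi; rewrite /mult_seq; lia.
have dmono : forall k, mult_seq rho k.+1 <= mult_seq rho 1.
  elim => [//|k IH].
  have hk : 1 <= k.+1 by [].
  have G1 : Gamma (rho k.+2 + rho k.+2 - rho k.+1).
    exact: (Garf _ _ _ (GE k.+2 isT) (GE k.+2 isT) (GE k.+1 isT) (ltnW (rinc k.+1 isT)) (leqnn _)).
  have := step k.+2 _ isT G1; have := rinc k.+1 hk; have := rinc k.+2 isT.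
  move: IH; rewrite /mult_seq; lia.
have d1 : mult_seq rho 1 = rho 2 by rewrite /mult_seq rho1 subn0.
have upper : exists2 x, 1 <= x <= rho 2 & x + B x <= e.
  case: (bigmin_cases (fun i => mult_seq rho i + i - 1) r (index_iota 1 r)); rewrite -/e.
    move=> ->; exists 1; first by have := rinc 1 isT; rewrite rho1 => ->.
    have : B 1 <= r.-1.
      apply: Bmax => m hm /gP /Gr [i hi ei] _; exists i => //; rewrite hi /=.
      case: (leqP r i) => h; last by lia.
      by have := rle _ _ r1 h; rewrite -/c; lia.
    lia.
  move=> [i]; rewrite mem_index_iota => /andP[hi hir] ->.
  exists (mult_seq rho i).
    rewrite dpos //= -d1; case: i hi {hir} => // i _; exact: dmono.
  have : B (mult_seq rho i) <= i.-1.
    apply: Bmax => m hm /gP /Gr [k hk ek] ng; subst m; exists k => //; rewrite hk /=.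
    case: (leqP i k) => h; last by lia.
    exfalso; move/negP: ng; apply; apply/gP.
    move: h; rewrite leq_eqVlt => /orP[/eqP <-|h].
      rewrite /mult_seq subnKC; first exact: GE.
      exact: ltnW (rinc _ hi).
    have := Garf (rho k) (rho i.+1) (rho i) (GE _ hk) (GE i.+1 isT) (GE _ hi)
      (ltnW (rinc _ hi)) (rle i.+1 k isT h).
    rewrite /mult_seq; have := rinc _ hi; move=> hh.
    by rewrite addnBA // ltnW.
  lia.
split.
  case: upper => x /andP[h1 h2] hle; exists x; split => //.
  have hl := lower x h1; have -> : e = x + B x by lia.
  exact: card.
move=> x k h1 h2 hc; rewrite (has_card_uniq _ _ _ hc (card x)); exact: lower.
Qed.
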